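(* Assume $\Delta=0$ and $2\mid pqr$. Let $\lambda_1,\lambda_2,\lambda_3\in K$ with $\lambda_ic_i\in N$, and let $s_i':=s_i\nu_i$, where $\nu_i\in N$ corresponds to $\lambda_ic_i$. Consider the relation $$(\mathcal{E})\qquad (4-\gamma)\lambda_1+(l+2)\lambda_2+(m+2)\lambda_3=-1.$$ (a) If $r=2r_1$, then $\big(s_1'(s_2's_3')^{r_1}\big)^2=1$ if and only if $(\mathcal{E})$ holds. If $q=2q_1$, then $\big(s_2'(s_3's_1')^{q_1}\big)^2=1$ if and only if $(\mathcal{E})$ holds. If $p=2p_1$, then $\big(s_3'(s_1's_2')^{p_1}\big)^2=1$ if and only if $(\mathcal{E})$ holds. (b) Consequently, if the exact sequence $1\to N\to G\to G/N\to 1$ splits (i.e. there is a homomorphism $\tau:G/N\to G$ with $\pi\circ\tau=\mathrm{id}$, $\pi:G\to G/N$ the projection), then there exist $\lambda_1,\lambda_2,\lambda_3\in K$ with $\lambda_ic_i\in N$ satisfying $(\mathcal{E})$ (namely those with $\tau(\pi(s_i))=s_i\nu_i$).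
   Context: Setting. Let $p,q,r\ge 3$ be integers and $W=W(p,q,r)$ the Coxeter group with generators $s_1,s_2,s_3$ and relations $s_i^2=1$, $(s_1s_2)^p=(s_1s_3)^q=(s_2s_3)^r=1$. Let $\alpha=4\cos^2(\pi k_1/p)$, $\beta=4\cos^2(\pi k_2/q)$, $\gamma=4\cos^2(\pi k_3/r)$ with $\gcd(k_1,p)=\gcd(k_2,q)=\gcd(k_3,r)=1$ (so $0<\alpha,\beta,\gamma<4$), and let $l,m\in\mathbb{C}$ with $lm=\gamma$. Let $K\subset\mathbb{C}$ be a field containing $\alpha,\beta,\gamma,l,m$, and $M$ a $3$-dimensional $K$-vector space with basis $(a_1,a_2,a_3)$. The reflection representation $R:W\to GL(M)$ with parameters $(\alpha,\beta,\gamma;l,m)$ is defined by: for $x=\lambda_1a_1+\lambda_2a_2+\lambda_3a_3$, $R(s_1)x=x-(2\lambda_1-\alpha\lambda_2-\beta\lambda_3)a_1$, $R(s_2)x=x-(-\lambda_1+2\lambda_2-l\lambda_3)a_2$, $R(s_3)x=x-(-\lambda_1-m\lambda_2+2\lambda_3)a_3$. Put $G=R(W)$ and write $s_i$ for $R(s_i)$. Let $\Delta=8-2\alpha-2\beta-2\gamma-(\alpha l+\beta m)$; $R$ is reducible iff $\Delta=0$. Reducible setting. Assume $\Delta=0$. Put $b=(4-\gamma)a_1+(l+2)a_2+(m+2)a_3$; then the space of $G$-fixed vectors is $C_M(G)=Kb$ and $(b,a_2,a_3)$ is a basis of $M$. Let $N=N(G)$ be the subgroup of elements of $G$ acting trivially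 on $M/C_M(G)$. Each $\zeta\in N$ satisfies $\zeta(b)=b$, $\zeta(a_2)=a_2+\lambda b$, $\zeta(a_3)=a_3+\mu b$ for a unique $(\lambda,\mu)\in K^2$; the map $\zeta\mapsto(\lambda,\mu)$ is an injective group homomorphism $N\to (K^2,+)$, through which $N$ is identified with an additive subgroup of $K^2$ (and written additively). Put $c_1=(\alpha,\beta)$, $c_2=(-2,l)$, $c_3=(m,-2)\in K^2$. *)

(* Defs.v *)
From HB Require Import structures.
From mathcomp Require Import all_boot all_order all_algebra.
Set Implicit Arguments. Unset Strict Implicit. Unset Printing Implicit Defensive.
Import Order.TTheory GRing.Theory Num.Theory.
Local Open Scope ring_scope.

(* Vectors of M are column coordinate vectors w.r.t. the basis (a1,a2,a3);
   linear maps of M are 3x3 matrices acting on the left; composition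
   s t (first t, then s) is the matrix product s *m t. *)

Definition vec3 {C : nzRingType} (x y z : C) : 'cV[C]_3 :=
  \col_(i < 3) nth 0 [:: x; y; z] i.

Definition mx3 {C : nzRingType} (r0 r1 r2 : seq C) : 'M[C]_3 :=
  \matrix_(i < 3, j < 3) nth 0 (nth [::] [:: r0; r1; r2] i) j.

Definition a1 {C : nzRingType} : 'cV[C]_3 := vec3 1 0 0.
Definition a2 {C : nzRingType} : 'cV[C]_3 := vec3 0 1 0.
Definition a3 {C : nzRingType} : 'cV[C]_3 := vec3 0 0 1.

(* R(s1) x = x - (2 l1 - al l2 - be l3) a1, etc. *)
Definition refl1 {C : nzRingType} (al be : C) : 'M[C]_3 :=
  mx3 [:: -1; al; be] [:: 0; 1; 0] [:: 0; 0; 1].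
Definition refl2 {C : nzRingType} (l : C) : 'M[C]_3 :=
  mx3 [:: 1; 0; 0] [:: 1; -1; l] [:: 0; 0; 1].
Definition refl3 {C : nzRingType} (m : C) : 'M[C]_3 :=
  mx3 [:: 1; 0; 0] [:: 0; 1; 0] [:: 1; m; -1].

Inductive inG {C : nzRingType} (al be l m : C) : 'M[C]_3 -> Prop :=
  | inG_1 : inG al be l m 1%:M
  | inG_s1 g : inG al be l m g -> inG al be l m (refl1 al be *m g)
  | inG_s2 g : inG al be l m g -> inG al be l m (refl2 l *m g)
  | inG_s3 g : inG al be l m g -> inG al be l m (refl3 m *m g).

Definition fixedG {C : nzRingType} (al be l m : C) (x : 'cV[C]_3) : Prop :=
  forall g, inG al be l m g -> g *m x = x.

(* N(G): elements of G acting trivially on M / C_M(G) *)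
Definition inN {C : nzRingType} (al be l m : C) (g : 'M[C]_3) : Prop :=
  inG al be l m g /\ forall x : 'cV[C]_3, fixedG al be l m (g *m x - x).

Definition bvec {C : nzRingType} (ga l m : C) : 'cV[C]_3 :=
  vec3 (4 - ga) (l + 2) (m + 2).

Definition corresp {C : nzRingType} (al be ga l m : C) (nu : 'M[C]_3) (v : C * C)
  : Prop :=
  inN al be l m nu /\
  nu *m bvec ga l m = bvec ga l m /\
  nu *m a2 = a2 + v.1 *: bvec ga l m /\
  nu *m a3 = a3 + v.2 *: bvec ga l m.

Definition scal2 {C : nzRingType} (k : C) (v : C * C) : C * C := (k * v.1, k * v.2).

(* A homomorphism
   tau : G/N -> G with pi o tau = id is encoded by sigma := tau o pi : G -> G,
   i.e. a homomorphism on G, trivial on N, with g^-1 sigma(g) in N. *)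
Definition splits {C : fieldType} (al be l m : C) : Prop :=
  exists sigma : 'M[C]_3 -> 'M[C]_3,
    (forall g, inG al be l m g -> inG al be l m (sigma g)) /\
    (forall g h, inG al be l m g -> inG al be l m h ->
       sigma (g *m h) = sigma g *m sigma h) /\
    (forall n, inN al be l m n -> sigma n = 1%:M) /\
    (forall g, inG al be l m g -> inN al be l m (invmx g *m sigma g)).

(* Main.v *)
Require Import Defs.
From HB Require Import structures.
From mathcomp Require Import all_boot all_order all_algebra.
From mathcomp Require Import ring zify.
Import Order.TTheory GRing.Theory Num.Theory.
Local Open Scope ring_scope.


Section Infra.
Context {C : fieldType}.

Definition M3 (a b c d e f g h i : C) : 'M[C]_3 := mx3 [::a;b;c] [::d;e;f] [::g;h;i].

Lemma mx3_eta (A : 'M[C]_3) : A = M3 (A 0 0) (A 0 1) (A 0 2) (A 1 0) (A 1 1) (A 1 2) (A 2 0) (A 2 1) (A 2 2).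
Proof.
apply/matrixP => i j; rewrite !mxE.
by case: i => [[|[|[|?]]] ?] //; case: j => [[|[|[|?]]] ?] //=; congr (A _ _); apply: val_inj.
Qed.

Lemma vec3_eta (v : 'cV[C]_3) : v = vec3 (v 0 0) (v 1 0) (v 2 0).
Proof.
apply/matrixP => i j; rewrite !mxE; rewrite (ord1 j).
by case: i => [[|[|[|?]]] ?] //=; congr (v _ _); apply: val_inj.
Qed.

Lemma M3_mul a b c d e f g h i a' b' c' d' e' f' g' h' i' :
  M3 a b c d e f g h i *m M3 a' b' c' d' e' f' g' h' i' =
  M3 (a*a'+b*d'+c*g') (a*b'+b*e'+c*h') (a*c'+b*f'+c*i')
     (d*a'+e*d'+f*g') (d*b'+e*e'+f*h') (d*c'+e*f'+f*i')
     (g*a'+h*d'+i*g') (g*b'+h*e'+i*h') (g*c'+h*f'+i*i').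
Proof.
apply/matrixP => r s; rewrite !mxE !big_ord_recl big_ord0 !mxE /=.
by case: r => [[|[|[|?]]] ?] //; case: s => [[|[|[|?]]] ?] //=; ring.
Qed.

Lemma M3_mulv a b c d e f g h i x y z :
  M3 a b c d e f g h i *m vec3 x y z =
  vec3 (a*x+b*y+c*z) (d*x+e*y+f*z) (g*x+h*y+i*z).
Proof.
apply/matrixP => r s; rewrite !mxE !big_ord_recl big_ord0 !mxE /=.
by case: r => [[|[|[|?]]] ?] //=; ring.
Qed.

Lemma M3_add a b c d e f g h i a' b' c' d' e' f' g' h' i' :
  M3 a b c d e f g h i + M3 a' b' c' d' e' f' g' h' i' =
  M3 (a+a') (b+b') (c+c') (d+d') (e+e') (f+f') (g+g') (h+h') (i+i').
Proof.
apply/matrixP => r s; rewrite !mxE.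
by case: r => [[|[|[|?]]] ?] //; case: s => [[|[|[|?]]] ?] //=.
Qed.

Lemma M3_opp a b c d e f g h i :
  - M3 a b c d e f g h i = M3 (-a) (-b) (-c) (-d) (-e) (-f) (-g) (-h) (-i).
Proof.
apply/matrixP => r s; rewrite !mxE.
by case: r => [[|[|[|?]]] ?] //; case: s => [[|[|[|?]]] ?] //=.
Qed.

Lemma M3_scale k a b c d e f g h i :
  k *: M3 a b c d e f g h i = M3 (k*a) (k*b) (k*c) (k*d) (k*e) (k*f) (k*g) (k*h) (k*i).
Proof.
apply/matrixP => r s; rewrite !mxE.
by case: r => [[|[|[|?]]] ?] //; case: s => [[|[|[|?]]] ?] //=.
Qed.

Lemma M3_1 : (1%:M : 'M[C]_3) = M3 1 0 0 0 1 0 0 0 1.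
Proof.
apply/matrixP => r s; rewrite !mxE.
by case: r => [[|[|[|?]]] ?] //; case: s => [[|[|[|?]]] ?] //=.
Qed.

Lemma M3_1r : (1 : 'M[C]_3) = M3 1 0 0 0 1 0 0 0 1.
Proof. exact: M3_1. Qed.

Lemma vec3_add x y z x' y' z' : vec3 x y z + vec3 x' y' z' = vec3 (x+x') (y+y') (z+z') :> 'cV[C]_3.
Proof. apply/matrixP => r s; rewrite !mxE. by case: r => [[|[|[|?]]] ?] //=. Qed.

Lemma vec3_scale k x y z : k *: vec3 x y z = vec3 (k*x) (k*y) (k*z) :> 'cV[C]_3.
Proof. apply/matrixP => r s; rewrite !mxE. by case: r => [[|[|[|?]]] ?] //=. Qed.

Lemma vec3_opp x y z : - vec3 x y z = vec3 (-x) (-y) (-z) :> 'cV[C]_3.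
Proof. apply/matrixP => r s; rewrite !mxE. by case: r => [[|[|[|?]]] ?] //=. Qed.

Lemma M3_entries a b c d e f g h i a' b' c' d' e' f' g' h' i' :
  M3 a b c d e f g h i = M3 a' b' c' d' e' f' g' h' i' ->
  [/\ a = a', b = b', c = c', d = d' & [/\ e = e', f = f', g = g', h = h' & i = i']].
Proof.
move=> H.
have E r s : (M3 a b c d e f g h i) r s = (M3 a' b' c' d' e' f' g' h' i') r s by rewrite H.
by move: (E 0 0) (E 0 1) (E 0 2) (E 1 0) (E 1 1) (E 1 2) (E 2 0) (E 2 1) (E 2 2); rewrite !mxE /=.
Qed.

Lemma vec3_entries x y z x' y' z' : vec3 x y z = vec3 x' y' z' :> 'cV[C]_3 -> [/\ x = x', y = y' & z = z'].
Proof.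
move=> H.
have E r : (vec3 x y z : 'cV[C]_3) r 0 = (vec3 x' y' z' : 'cV[C]_3) r 0 by rewrite H.
by move: (E 0) (E 1) (E 2); rewrite !mxE /=.
Qed.

End Infra.

Ltac mxsimp := rewrite ?expr2 ?exprS ?expr0 ?mulr1 -?mulmxE ?M3_1 ?M3_1r;
  repeat progress rewrite ?M3_mul ?M3_add ?M3_opp ?M3_scale ?M3_mulv ?vec3_add ?vec3_scale ?vec3_opp.

Lemma zm5 (V : zmodType) (a b r s t : V) : a + b + (r - s + t) = t + (a - s) + (b + r).
Proof.
rewrite !addrA -[t + a]addrC.
rewrite (addrAC _ t) (addrAC _ t) (addrAC _ t). congr (_ + _).
by rewrite (addrAC _ (-s)) (addrAC _ (-s)).
Qed.

Lemma lin_comb (C : fieldType) (V : lmodType C) (e0 e1 e2 : V) a b c k :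
  a*:e1 + b*:e2 + c*:(k*:e2 - k*:e1 + e0) = c*:e0 + (a - k*c)*:e1 + (b + k*c)*:e2.
Proof.
rewrite !scalerDr scalerN !scalerA scalerBl scalerDl (mulrC c k).
exact: zm5.
Qed.

Lemma zm4 (V : zmodType) (a b d e : V) : a - b + d - e = d - e - b + a.
Proof.
by rewrite [RHS]addrC !addrA (addrAC a (-b) d) -(addrA (a + d)) -(addrA (a+d)) (addrC (-b)).
Qed.

Lemma lin_comb2 (C : fieldType) (V : lmodType C) (e0 e1 e2 : V) k s :
  k *: (e2 - s *: e1 + e0) - e0 = (k - 1) *: e0 + (- (k * s)) *: e1 + k *: e2.
Proof.
rewrite !scalerDr scalerN !scalerA scalerBl scale1r scaleNr.
exact: zm4.
Qed.

Section Pow.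
Variable C : fieldType.
Variables (z : C) (X : 'M[C]_3).
Hypothesis z0 : z != 0.
Hypothesis z1 : z - 1 != 0.
Hypothesis z2 : z * z - 1 != 0.
Let s := z + z^-1.
Hypothesis cub : X^+3 = (1+s)*:X^+2 - (1+s)*:X + 1.

Let d := 2 - s.
Let D1 := (z-1)*(z - z^-1).
Let D2 := (z^-1-1)*(z^-1 - z).
Let u t := 1/d + t*z^-1/D1 + t^-1*z/D2.
Let v t := -s/d - t*(1+z^-1)/D1 - t^-1*(1+z)/D2.
Let w t := 1/d + t/D1 + t^-1/D2.

Lemma pow_form k : X^+k = u (z^+k) *: 1 + v (z^+k) *: X + w (z^+k) *: X^+2.
Proof.
have h1 : 1 + - z * z != 0.
  by apply: contraNneq z2 => h; rewrite -oppr_eq0 -h; apply/eqP; ring.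
have h2 : 1 + -1 * z != 0.
  by apply: contraNneq z1 => h; rewrite -oppr_eq0 -h; apply/eqP; ring.
have h3 : 2 * z - (z * z + 1) != 0.
  have -> : 2 * z - (z * z + 1) = - ((z - 1) * (z - 1)) by ring.
  by rewrite oppr_eq0 mulf_neq0.
have h4 : (1 : C) != 0 := oner_neq0 C.
elim: k => [|k IH].
  rewrite expr0 expr0 /u /v /w /s /d /D1 /D2.
  have -> : 1/(2 - (z + z^-1)) + 1 * z^-1 / ((z - 1) * (z - z^-1)) + 1^-1 * z / ((z^-1 - 1) * (z^-1 - z)) = 1.
    by field; rewrite z0 h1 h2 h3 z1 z2 h4.
  have -> : - (z + z^-1) / (2 - (z + z^-1)) - 1 * (1 + z^-1) / ((z - 1) * (z - z^-1)) -
     1^-1 * (1 + z) / ((z^-1 - 1) * (z^-1 - z)) = 0.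
    by field; rewrite z0 h1 h2 h3 z1 z2 h4.
  have -> : 1/(2 - (z + z^-1)) + 1 / ((z - 1) * (z - z^-1)) + 1^-1 / ((z^-1 - 1) * (z^-1 - z)) = 0.
    by field; rewrite z0 h1 h2 h3 z1 z2 h4.
  by rewrite !scale0r !addr0 scale1r.
rewrite exprS IH.
have e a b c : X * (a*:1 + b*:X + c*:X^+2) = c*:1 + (a - (1+s)*c)*:X + (b + (1+s)*c)*:X^+2.
  by rewrite !mulrDr -!scalerAr mulr1 -expr2 -exprS cub lin_comb.
rewrite e exprS.
have t0 : z ^+ k != 0 by rewrite expf_neq0.
move: t0; set t := z ^+ k => t0.
congr (_ *: _ + _ *: _ + _ *: _); rewrite /u /v /w /d /D1 /D2 /s !exprS -/t.
- by field; rewrite ?z0 ?h1 ?h2 ?h3 ?z1 ?z2 ?h4 ?t0.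
- by field; rewrite ?z0 ?h1 ?h2 ?h3 ?z1 ?z2 ?h4 ?t0.
- by field; rewrite ?z0 ?h1 ?h2 ?h3 ?z1 ?z2 ?h4 ?t0.
Qed.

Lemma pow_half n : z ^+ n = -1 ->
  X^+n = (2 / (2 - s)) *: (X^+2 - s *: X + 1) - 1.
Proof.
move=> hn.
have h1 : 1 + - z * z != 0.
  by apply: contraNneq z2 => h; rewrite -oppr_eq0 -h; apply/eqP; ring.
have h2 : 1 + -1 * z != 0.
  by apply: contraNneq z1 => h; rewrite -oppr_eq0 -h; apply/eqP; ring.
have h3 : 2 * z - (z * z + 1) != 0.
  have -> : 2 * z - (z * z + 1) = - ((z - 1) * (z - 1)) by ring.
  by rewrite oppr_eq0 mulf_neq0.
have h4 : (1 : C) != 0 := oner_neq0 C.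
have h5 : (-1 : C) != 0 by rewrite oppr_eq0 oner_eq0.
rewrite pow_form hn lin_comb2.
congr (_ *: _ + _ *: _ + _ *: _); rewrite /u /v /w /d /D1 /D2 /s.
- by field; rewrite ?z0 ?h1 ?h2 ?h3 ?z1 ?z2 ?h4 ?h5.
- by field; rewrite ?z0 ?h1 ?h2 ?h3 ?z1 ?z2 ?h4 ?h5.
- by field; rewrite ?z0 ?h1 ?h2 ?h3 ?z1 ?z2 ?h4 ?h5.
Qed.
End Pow.

Section Key.
Variable C : fieldType.

Lemma pow_comm (A A' P : 'M[C]_3) n : A' *m P = P *m A -> A'^+n *m P = P *m A^+n.
Proof.
move=> h; elim: n => [|n IH]; first by rewrite !expr0 mul1mx mulmx1.
by rewrite !exprS -!mulmxE -mulmxA IH !mulmxA h.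
Qed.

Arguments pow_comm {A A' P} n.

Lemma pow_fix (A : 'M[C]_3) (v : 'cV[C]_3) n : A *m v = v -> A^+n *m v = v.
Proof.
move=> h; elim: n => [|n IH]; first by rewrite expr0 mul1mx.
by rewrite exprS -mulmxE -mulmxA IH h.
Qed.

Lemma key (Si Sj Sk Si' Sj' Sk' P Rk : 'M[C]_3) (bv : 'cV[C]_3) (xr : 'rV[C]_3)
  (n : nat) (c D : C) :
  Si' *m P = P *m Si -> Sj' *m P = P *m Sj -> Sk' *m P = P *m Sk ->
  Si' *m bv = bv -> Sj' *m bv = bv -> Sk' *m bv = bv ->
  (Si *m (Sj *m Sk)^+n)^+2 = 1%:M + c *: Rk ->
  P *m Rk = D *: Rk -> P = 1%:M + bv *m xr -> c != 0 -> Rk != 0 ->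
  ((Si' *m (Sj' *m Sk')^+n)^+2 = 1%:M <-> D = 0).
Proof.
move=> hi hj hk bi bj bk hW hR hP c0 R0.
have hjk : (Sj' *m Sk') *m P = P *m (Sj *m Sk) by rewrite -mulmxA hk !mulmxA hj.
have hW1 : (Si' *m (Sj' *m Sk')^+n) *m P = P *m (Si *m (Sj *m Sk)^+n).
  by rewrite -mulmxA (pow_comm n hjk) !mulmxA hi.
have hW2 := pow_comm 2 hW1.
rewrite hW mulmxDr mulmx1 -scalemxAr hR scalerA in hW2.
have bW : (Si' *m (Sj' *m Sk')^+n)^+2 *m bv = bv.
  apply: pow_fix; rewrite -mulmxA pow_fix //; rewrite -mulmxA bk bj //.
split.
- move=> h; rewrite h mul1mx in hW2.
  have : (c * D) *: Rk = 0 by apply: (addrI P); rewrite -hW2 addr0.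
  move/eqP; rewrite scaler_eq0 (negbTE R0) orbF mulf_eq0 (negbTE c0) /=.
  by move/eqP.
- move=> D0; rewrite D0 mulr0 scale0r addr0 in hW2.
  have e1 : 1%:M = P - bv *m xr by rewrite hP addrK.
  by rewrite -[LHS]mulmx1 e1 mulmxBr hW2 mulmxA bW -e1.
Qed.
End Key.


Section Conc.
Context {C : fieldType}.
Variables al be ga l m : C.
Hypothesis hg : l * m = ga.
Hypothesis hD : 8 - 2 * al - 2 * be - 2 * ga - (al * l + be * m) = 0.
Hypothesis g4 : 4 - ga != 0.
Hypothesis l2 : l + 2 != 0.
Hypothesis m2 : m + 2 != 0.

Lemma hal' : al = (8 - 2*be - 2*ga - be * m)/(l+2).
Proof. apply: (mulIf l2); rewrite divfK //. apply/eqP; rewrite -subr_eq0; apply/eqP; rewrite -[X in _ = X]oppr0 -hD; ring. Qed.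
Lemma hbe' : be = (8 - 2*al - 2*ga - al * l)/(m+2).
Proof. apply: (mulIf m2); rewrite divfK //. apply/eqP; rewrite -subr_eq0; apply/eqP; rewrite -[X in _ = X]oppr0 -hD; ring. Qed.

Definition bv := bvec ga l m.

Lemma fix1 : refl1 al be *m bv = bv.
Proof.
rewrite /refl1 /bv /bvec -/(M3 _ _ _ _ _ _ _ _ _); mxsimp; congr vec3; rewrite ?hal' -?hg; (field; by rewrite ?l2 ?m2).
Qed.

Lemma g4' : 4 - l * m != 0. Proof. by rewrite hg. Qed.
Lemma g4'' : 2 - (l * m - 2) != 0.
Proof. have -> : 2 - (l * m - 2) = 4 - l * m by ring. exact: g4'. Qed.

Ltac solve_mx := mxsimp; congr M3; rewrite ?hal' -?hg; (field; by rewrite ?l2 ?m2 ?g4' ?g4'').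
Ltac solve_mxb := mxsimp; congr M3; rewrite ?hbe' -?hg; (field; by rewrite ?l2 ?m2 ?g4' ?g4'').

Definition rk (r0 r1 r2 : C) := M3 ((4-ga)*r0) ((4-ga)*r1) ((4-ga)*r2)
   ((l+2)*r0) ((l+2)*r1) ((l+2)*r2) ((m+2)*r0) ((m+2)*r1) ((m+2)*r2).

Definition Tr := refl2 l *m refl3 m.
Lemma cub_r : Tr^+3 = (1 + (ga-2)) *: Tr^+2 - (1+(ga-2)) *: Tr + 1.
Proof. rewrite /Tr /refl2 /refl3 -!/(M3 _ _ _ _ _ _ _ _ _). mxsimp; congr M3; rewrite ?hal' -?hg. all: field. all: by rewrite ?l2 ?m2 ?g4'. Qed.

Definition Vr := M3 1 0 0 (2*(l+2)/(4-ga)) (-1) 0 (2*(m+2)/(4-ga)) 0 (-1).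
Lemma V_r : (2 / (2 - (ga - 2))) *: (Tr^+2 - (ga-2) *: Tr + 1) - 1 = Vr.
Proof. rewrite /Vr /Tr /refl2 /refl3 -!/(M3 _ _ _ _ _ _ _ _ _). solve_mx. Qed.

Lemma W_r : (refl1 al be *m Vr)^+2 = 1%:M + (2/(4-ga)) *: rk 2 (-al) (-be).
Proof. rewrite /Vr /rk /refl1 -!/(M3 _ _ _ _ _ _ _ _ _). solve_mx. Qed.

Section Q.
Hypothesis b4 : 4 - be != 0.
Lemma b4'' : 2 - (be - 2) != 0.
Proof. have -> : 2 - (be - 2) = 4 - be by ring. exact: b4. Qed.

Definition Tq := refl3 m *m refl1 al be.
Lemma cub_q : Tq^+3 = (1 + (be-2)) *: Tq^+2 - (1+(be-2)) *: Tq + 1.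
Proof. rewrite /Tq /refl1 /refl3 -!/(M3 _ _ _ _ _ _ _ _ _). mxsimp; congr M3; (field; by []). Qed.

Definition Vq := M3 (-1) (2*(4-ga)/(l+2)) 0 0 1 0 0 (2*(m+2)/(l+2)) (-1).
Lemma V_q : (2 / (2 - (be - 2))) *: (Tq^+2 - (be-2) *: Tq + 1) - 1 = Vq.
Proof. rewrite /Vq /Tq /refl1 /refl3 -!/(M3 _ _ _ _ _ _ _ _ _).
mxsimp; congr M3; rewrite ?hal' -?hg; (field; by rewrite ?l2 ?b4'').
Qed.

Lemma W_q : (refl2 l *m Vq)^+2 = 1%:M + (2/(l+2)) *: rk (-1) 2 (-l).
Proof. rewrite /Vq /rk /refl2 -!/(M3 _ _ _ _ _ _ _ _ _). solve_mx. Qed.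
End Q.

Section P.
Hypothesis a4 : 4 - al != 0.
Lemma a4'' : 2 - (al - 2) != 0.
Proof. have -> : 2 - (al - 2) = 4 - al by ring. exact: a4. Qed.

Definition Tp := refl1 al be *m refl2 l.
Lemma cub_p : Tp^+3 = (1 + (al-2)) *: Tp^+2 - (1+(al-2)) *: Tp + 1.
Proof. rewrite /Tp /refl1 /refl2 -!/(M3 _ _ _ _ _ _ _ _ _). mxsimp; congr M3; (field; by []). Qed.

Definition Vp := M3 (-1) 0 (2*(4-ga)/(m+2)) 0 (-1) (2*(l+2)/(m+2)) 0 0 1.
Lemma V_p : (2 / (2 - (al - 2))) *: (Tp^+2 - (al-2) *: Tp + 1) - 1 = Vp.
Proof. rewrite /Vp /Tp /refl1 /refl2 -!/(M3 _ _ _ _ _ _ _ _ _).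
mxsimp; congr M3; rewrite ?hbe' -?hg; (field; by rewrite ?m2 ?a4'').
Qed.

Lemma W_p : (refl3 m *m Vp)^+2 = 1%:M + (2/(m+2)) *: rk (-1) (-m) 2.
Proof. rewrite /Vp /rk /refl3 -!/(M3 _ _ _ _ _ _ _ _ _). solve_mxb. Qed.
End P.

End Conc.


Section Prime.
Context {C : fieldType}.
Variables al be ga l m : C.
Hypothesis hg : l * m = ga.
Hypothesis hD : 8 - 2 * al - 2 * be - 2 * ga - (al * l + be * m) = 0.
Hypothesis g4 : 4 - ga != 0.
Hypothesis l2 : l + 2 != 0.
Hypothesis m2 : m + 2 != 0.

Let hal2 : al = (8 - 2*be - 2*ga - be * m)/(l+2). Proof. exact: hal'. Qed.
Let hbe2 : be = (8 - 2*al - 2*ga - al * l)/(m+2). Proof. exact: hbe'. Qed.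
Let g4' : 4 - l * m != 0. Proof. by rewrite hg. Qed.

Definition f1 (la mu : C) := - ((l+2)*la + (m+2)*mu) / (4 - ga).
Definition Nu (la mu : C) := M3 (1 + (4-ga)*f1 la mu) ((4-ga)*la) ((4-ga)*mu)
  ((l+2)*f1 la mu) (1+(l+2)*la) ((l+2)*mu) ((m+2)*f1 la mu) ((m+2)*la) (1+(m+2)*mu).

Lemma corresp_form nu la mu : corresp al be ga l m nu (la, mu) -> nu = Nu la mu.
Proof.
case=> _ [hb [h2 h3]].
move: hb h2 h3; rewrite /bvec /a2 /a3 /= (mx3_eta nu) /Nu /f1.
set n00 := nu 0 0; set n01 := nu 0 1; set n02 := nu 0 2.
set n10 := nu 1 0; set n11 := nu 1 1; set n12 := nu 1 2.
set n20 := nu 2 0; set n21 := nu 2 1; set n22 := nu 2 2.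
mxsimp => /vec3_entries [e1 e2 e3] /vec3_entries [e4 e5 e6] /vec3_entries [e7 e8 e9].
have E01 : n01 = (4-ga)*la by transitivity (n00 * 0 + n01 * 1 + n02 * 0); [ring | rewrite e4; ring].
have E11 : n11 = 1 + (l+2)*la by transitivity (n10 * 0 + n11 * 1 + n12 * 0); [ring | rewrite e5; ring].
have E21 : n21 = (m+2)*la by transitivity (n20 * 0 + n21 * 1 + n22 * 0); [ring | rewrite e6; ring].
have E02 : n02 = (4-ga)*mu by transitivity (n00 * 0 + n01 * 0 + n02 * 1); [ring | rewrite e7; ring].
have E12 : n12 = (l+2)*mu by transitivity (n10 * 0 + n11 * 0 + n12 * 1); [ring | rewrite e8; ring].
have E22 : n22 = 1 + (m+2)*mu by transitivity (n20 * 0 + n21 * 0 + n22 * 1); [ring | rewrite e9; ring].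
rewrite E01 E11 E21 E02 E12 E22 in e1 e2 e3 *.
congr M3.
- apply: (mulIf g4); transitivity (n00 * (4 - ga) + (4 - ga) * la * (l + 2) + (4 - ga) * mu * (m + 2)
     - ((4 - ga) * la * (l + 2) + (4 - ga) * mu * (m + 2))); first by ring.
  rewrite e1; field; by rewrite g4.
- apply: (mulIf g4); transitivity (n10 * (4 - ga) + (1 + (l + 2) * la) * (l + 2) + (l + 2) * mu * (m + 2)
     - ((1 + (l + 2) * la) * (l + 2) + (l + 2) * mu * (m + 2))); first by ring.
  rewrite e2; field; by rewrite g4.
- apply: (mulIf g4); transitivity (n20 * (4 - ga) + (m + 2) * la * (l + 2) + (1 + (m + 2) * mu) * (m + 2)
     - ((m + 2) * la * (l + 2) + (1 + (m + 2) * mu) * (m + 2))); first by ring.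
  rewrite e3; field; by rewrite g4.
Qed.

Definition row3 (x y z : C) : 'rV[C]_3 := \row_(j < 3) nth 0 [:: x; y; z] j.

Lemma colrow a b c x y z : vec3 a b c *m row3 x y z = M3 (a*x) (a*y) (a*z) (b*x) (b*y) (b*z) (c*x) (c*y) (c*z).
Proof.
apply/matrixP => r s; rewrite !mxE big_ord1 !mxE.
by case: r => [[|[|[|?]]] ?] //; case: s => [[|[|[|?]]] ?] //=.
Qed.

Definition Pm x1 x2 x3 := M3 (1 + (4-ga)*x1) ((4-ga)*x2) ((4-ga)*x3) ((l+2)*x1) (1 + (l+2)*x2) ((l+2)*x3)
  ((m+2)*x1) ((m+2)*x2) (1+(m+2)*x3).

Lemma Pm_eq x1 x2 x3 : Pm x1 x2 x3 = 1%:M + bv ga l m *m row3 x1 x2 x3.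
Proof. rewrite /bv /bvec colrow M3_1 M3_add /Pm; congr M3; ring. Qed.

Lemma rk_eq r0 r1 r2 : rk ga l m r0 r1 r2 = bv ga l m *m row3 r0 r1 r2.
Proof. by rewrite /bv /bvec colrow. Qed.

Lemma PR x1 x2 x3 r0 r1 r2 : Pm x1 x2 x3 *m rk ga l m r0 r1 r2 =
  (1 + (4-ga)*x1 + (l+2)*x2 + (m+2)*x3) *: rk ga l m r0 r1 r2.
Proof. rewrite /Pm /rk; mxsimp; congr M3; ring. Qed.

Ltac solve_a := mxsimp; congr M3; rewrite ?hal2 -?hg; (field; by rewrite ?l2 ?m2 ?g4').
Ltac solve_v := mxsimp; congr vec3; rewrite ?hal2 -?hg; (field; by rewrite ?l2 ?m2 ?g4').

Lemma comm1 x1 x2 x3 : refl1 al be *m Nu (x1*al) (x1*be) *m Pm x1 x2 x3 = Pm x1 x2 x3 *m refl1 al be.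
Proof. rewrite /Nu /f1 /Pm /refl1 -!/(M3 _ _ _ _ _ _ _ _ _). solve_a. Qed.
Lemma comm2 x1 x2 x3 : refl2 l *m Nu (x2 * -2) (x2 * l) *m Pm x1 x2 x3 = Pm x1 x2 x3 *m refl2 l.
Proof. rewrite /Nu /f1 /Pm /refl2 -!/(M3 _ _ _ _ _ _ _ _ _). solve_a. Qed.
Lemma comm3 x1 x2 x3 : refl3 m *m Nu (x3 * m) (x3 * -2) *m Pm x1 x2 x3 = Pm x1 x2 x3 *m refl3 m.
Proof. rewrite /Nu /f1 /Pm /refl3 -!/(M3 _ _ _ _ _ _ _ _ _). solve_a. Qed.

Lemma fixp1 x : refl1 al be *m Nu (x*al) (x*be) *m bv ga l m = bv ga l m.
Proof. rewrite /Nu /f1 /bv /bvec /refl1 -!/(M3 _ _ _ _ _ _ _ _ _). solve_v. Qed.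
Lemma fixp2 x : refl2 l *m Nu (x * -2) (x * l) *m bv ga l m = bv ga l m.
Proof. rewrite /Nu /f1 /bv /bvec /refl2 -!/(M3 _ _ _ _ _ _ _ _ _). solve_v. Qed.
Lemma fixp3 x : refl3 m *m Nu (x * m) (x * -2) *m bv ga l m = bv ga l m.
Proof. rewrite /Nu /f1 /bv /bvec /refl3 -!/(M3 _ _ _ _ _ _ _ _ _). solve_v. Qed.

Lemma rk_neq0 r0 r1 r2 : (r0 != 0) || (r1 != 0) || (r2 != 0) -> rk ga l m r0 r1 r2 != 0.
Proof.
move=> h; apply/eqP => /(congr1 (fun A : 'M[C]_3 => (A 0 0, A 0 1, A 0 2))).
rewrite /rk !mxE /= => [[]] /eqP; rewrite mulf_eq0 (negbTE g4) /= => /eqP e0.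
move/eqP; rewrite mulf_eq0 (negbTE g4) /= => /eqP e1.
move/eqP; rewrite mulf_eq0 (negbTE g4) /= => /eqP e2.
by move: h; rewrite e0 e1 e2 eqxx.
Qed.

Section Invol.
Hypothesis two : (2:C) != 0.

Lemma invol1 la mu : (refl1 al be *m Nu la mu)^+2 = 1%:M -> exists x, la = x*al /\ mu = x*be.
Proof.
rewrite /Nu /refl1 -!/(M3 _ _ _ _ _ _ _ _ _); mxsimp.
case/M3_entries => _ e1 e2 _ _.
exists (- f1 la mu / 2).
have k1 : (4-ga)*(al * f1 la mu + 2*la) = 0.
  rewrite -[RHS](subrr 0) -{1}e1 /f1; rewrite ?hal2 -?hg; (field; by rewrite ?l2 ?m2 ?g4').
have k2 : (4-ga)*(be * f1 la mu + 2*mu) = 0.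
  rewrite -[RHS](subrr 0) -{1}e2 /f1; rewrite ?hal2 -?hg; (field; by rewrite ?l2 ?m2 ?g4').
move: k1 k2 => /eqP; rewrite mulf_eq0 (negbTE g4) /= => /eqP k1 /eqP.
rewrite mulf_eq0 (negbTE g4) /= => /eqP k2.
split.
- transitivity (((al * f1 la mu + 2 * la) - al * f1 la mu) / 2); first by field.
  by rewrite k1; field.
- transitivity (((be * f1 la mu + 2 * mu) - be * f1 la mu) / 2); first by field.
  by rewrite k2; field.
Qed.

Lemma invol2 la mu : (refl2 l *m Nu la mu)^+2 = 1%:M -> exists x, la = x * -2 /\ mu = x * l.
Proof.
rewrite /Nu /refl2 -!/(M3 _ _ _ _ _ _ _ _ _); mxsimp.
case/M3_entries => _ _ e2 _ _.
exists (- la / 2).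
have k2 : (4-ga)*(l * la + 2*mu) = 0.
  rewrite -[RHS](subrr 0) -{1}e2 /f1; rewrite -?hg; (field; by rewrite ?l2 ?m2 ?g4').
move: k2 => /eqP; rewrite mulf_eq0 (negbTE g4) /= => /eqP k2.
split; first by field.
transitivity (((l * la + 2 * mu) - l * la) / 2); first by field.
by rewrite k2; field.
Qed.

Lemma invol3 la mu : (refl3 m *m Nu la mu)^+2 = 1%:M -> exists x, la = x * m /\ mu = x * -2.
Proof.
rewrite /Nu /refl3 -!/(M3 _ _ _ _ _ _ _ _ _); mxsimp.
case/M3_entries => _ e1 _ _ _.
exists (- mu / 2).
have k1 : (4-ga)*(2 * la + m * mu) = 0.
  rewrite -[RHS](subrr 0) -{1}e1 /f1; rewrite -?hg; (field; by rewrite ?l2 ?m2 ?g4').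
move: k1 => /eqP; rewrite mulf_eq0 (negbTE g4) /= => /eqP k1.
split; last by field.
transitivity (((2 * la + m * mu) - m * mu) / 2); first by field.
by rewrite k1; field.
Qed.

End Invol.

End Prime.


Section Grp.
Context {C : fieldType}.
Variables al be ga l m : C.
Hypothesis hg : l * m = ga.
Hypothesis hD : 8 - 2 * al - 2 * be - 2 * ga - (al * l + be * m) = 0.
Hypothesis g4 : 4 - ga != 0.
Hypothesis l2 : l + 2 != 0.
Hypothesis m2 : m + 2 != 0.

Lemma inG_mul g h : inG al be l m g -> inG al be l m h -> inG al be l m (g *m h).
Proof.
move=> hg' hh; elim: hg' => [|g' _ IH|g' _ IH|g' _ IH]; first by rewrite mul1mx.
- by rewrite -mulmxA; apply: inG_s1.
- by rewrite -mulmxA; apply: inG_s2.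
- by rewrite -mulmxA; apply: inG_s3.
Qed.

Lemma inG_pow g n : inG al be l m g -> inG al be l m (g ^+ n).
Proof.
move=> h; elim: n => [|n IH]; first exact: inG_1.
by rewrite exprS; apply: inG_mul.
Qed.

Lemma inG1 : inG al be l m (refl1 al be).
Proof. by rewrite -[refl1 _ _]mulmx1; apply: inG_s1; apply: inG_1. Qed.
Lemma inG2 : inG al be l m (refl2 l).
Proof. by rewrite -[refl2 _]mulmx1; apply: inG_s2; apply: inG_1. Qed.
Lemma inG3 : inG al be l m (refl3 m).
Proof. by rewrite -[refl3 _]mulmx1; apply: inG_s3; apply: inG_1. Qed.

Lemma fix2 : refl2 l *m bv ga l m = bv ga l m.
Proof. rewrite /refl2 /bv /bvec -/(M3 _ _ _ _ _ _ _ _ _); mxsimp; congr vec3; rewrite -hg; ring. Qed.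
Lemma fix3 : refl3 m *m bv ga l m = bv ga l m.
Proof. rewrite /refl3 /bv /bvec -/(M3 _ _ _ _ _ _ _ _ _); mxsimp; congr vec3; rewrite -hg; ring. Qed.

Lemma inG_fix g : inG al be l m g -> g *m bv ga l m = bv ga l m.
Proof.
elim=> [|g' _ IH|g' _ IH|g' _ IH]; first by rewrite mul1mx.
- by rewrite -mulmxA IH; apply: fix1.
- by rewrite -mulmxA IH fix2.
- by rewrite -mulmxA IH fix3.
Qed.

Lemma inN_1 : inN al be l m 1%:M.
Proof. split; first exact: inG_1. by move=> x g _; rewrite mul1mx subrr mulmx0. Qed.

Lemma fixed_vec v : refl2 l *m v = v -> refl3 m *m v = v -> v = (v 0 0 / (4 - ga)) *: bv ga l m.
Proof.
rewrite (vec3_eta v) /refl2 /refl3 /bv /bvec -!/(M3 _ _ _ _ _ _ _ _ _) !mxE /=.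
set a := v 0 0; set b := v 1 0; set c := v 2 0.
mxsimp => /vec3_entries [_ e2 _] /vec3_entries [_ _ e3].
have E2 : b = (l + 2) * a / (4 - ga).
  apply: (mulIf g4); rewrite divfK //.
  transitivity (b * (4 - l * m)); first by rewrite hg.
  transitivity ((b - (1 * a + -1 * b + l * c)) * 2 + (b - (0 * a + 0 * b + 1 * c)) * 0 + l * (c - (1 * a + m * b + -1 * c)) + (l + 2) * a); first by ring.
  by rewrite e2 e3 !subrr; ring.
have E3 : c = (m + 2) * a / (4 - ga).
  apply: (mulIf g4); rewrite divfK //.
  transitivity (c * (4 - l * m)); first by rewrite hg.
  transitivity (m * (b - (1 * a + -1 * b + l * c)) + (c - (1 * a + m * b + -1 * c)) * 2 + (m + 2) * a); first by ring.
  by rewrite e2 e3 !subrr; ring.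
congr vec3; rewrite ?E2 ?E3; field; by rewrite g4.
Qed.

Lemma inN_corresp nu : inN al be l m nu ->
  corresp al be ga l m nu ((nu *m a2 - a2) 0 0 / (4 - ga), (nu *m a3 - a3) 0 0 / (4 - ga)).
Proof.
move=> hN; split => //; case: hN => hG hF.
split; first exact: inG_fix.
have key v : nu *m v = v + ((nu *m v - v) 0 0 / (4 - ga)) *: bv ga l m.
  have hv := hF v.
  rewrite -(fixed_vec _ (hv _ inG2) (hv _ inG3)).
  by rewrite addrC subrK.
by split; apply: key.
Qed.

Lemma inN_W W c r0 r1 r2 : inG al be l m W -> W = 1%:M + c *: rk ga l m r0 r1 r2 -> inN al be l m W.
Proof.
move=> hG hW; split => // x g hg'.
have -> : W *m x - x = c *: (rk ga l m r0 r1 r2 *m x).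
  by rewrite hW mulmxDl mul1mx addrC addKr scalemxAl.
by rewrite -scalemxAr mulmxA rk_eq mulmxA inG_fix.
Qed.

End Grp.


Lemma prim_facts {C : numClosedFieldType} {n : nat} {z : C} :
  (3 <= n)%N -> n.-primitive_root z -> [/\ z != 0, z - 1 != 0 & z * z - 1 != 0].
Proof.
move=> hn hz; split.
- apply/eqP => z0; have := prim_expr_order hz; rewrite z0 expr0n.
  by case: n hn {hz} => // n _ /eqP; rewrite eq_sym oner_eq0.
- rewrite subr_eq0; apply/negP => /eqP z1.
  have := prim_order_dvd hz 1; rewrite expr1 z1 eqxx dvdn1 => /eqP hn1.
  by rewrite hn1 in hn.
- rewrite subr_eq0 -expr2; apply/negP => h.
  have := prim_order_dvd hz 2; rewrite h => /dvdn_leq h2.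
  by have := h2 isT; case: n hn {hz h2} => [|[|[|]]].
Qed.

Lemma prim_half {C : numClosedFieldType} {n n1 : nat} {z : C} :
  (3 <= n)%N -> n.-primitive_root z -> n = (2 * n1)%N -> z ^+ n1 = -1.
Proof.
move=> hn hz hn1.
have : (z ^+ n1) ^+ 2 == 1 by rewrite -exprM mulnC -hn1 prim_expr_order.
rewrite sqrf_eq1 => /orP [h|/eqP //].
have := prim_order_dvd hz n1; rewrite h => /dvdn_leq.
have n1pos : (0 < n1)%N by lia.
move=> /(_ n1pos); rewrite hn1 => hle; lia.
Qed.

Lemma four_nz {C : fieldType} {z : C} : z != 0 -> z - 1 != 0 -> 4 - (2 + z + z^-1) != 0.
Proof.
move=> z0 z1.
have -> : 4 - (2 + z + z^-1) = - ((z - 1) * (z - 1)) / z by field.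
by rewrite mulf_neq0 ?invr_eq0 // oppr_eq0 mulf_neq0.
Qed.

Lemma l2_nz {C : fieldType} {al be ga l m : C} : l * m = ga ->
  8 - 2 * al - 2 * be - 2 * ga - (al * l + be * m) = 0 -> 4 - be != 0 -> 4 - ga != 0 -> l + 2 != 0.
Proof.
move=> hg hD b4 g4; apply/negP => /eqP h.
have hl : l = -2 by apply/eqP; rewrite -subr_eq0 opprK h.
subst l ga.
have : (4 - be) * (4 - -2 * m) = 0 by rewrite -[RHS](mulr0 2) -hD; ring.
by move/eqP; rewrite mulf_eq0 (negbTE b4) (negbTE g4).
Qed.

Lemma m2_nz {C : fieldType} {al be ga l m : C} : l * m = ga ->
  8 - 2 * al - 2 * be - 2 * ga - (al * l + be * m) = 0 -> 4 - al != 0 -> 4 - ga != 0 -> m + 2 != 0.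
Proof.
move=> hg hD a4 g4; apply/negP => /eqP h.
have hm : m = -2 by apply/eqP; rewrite -subr_eq0 opprK h.
subst m ga.
have : (4 - al) * (4 - l * -2) = 0 by rewrite -[RHS](mulr0 2) -hD; ring.
by move/eqP; rewrite mulf_eq0 (negbTE a4) (negbTE g4).
Qed.

Theorem theorem2 (C : numClosedFieldType) (p q r : nat)
  (z1 z2 z3 : C) (al be ga l m : C)
  (hp : (3 <= p)%N) (hq : (3 <= q)%N) (hr : (3 <= r)%N)
  (hz1 : p.-primitive_root z1) (hz2 : q.-primitive_root z2)
  (hz3 : r.-primitive_root z3)
  (hal : al = 2 + z1 + z1^-1) (hbe : be = 2 + z2 + z2^-1)
  (hga : ga = 2 + z3 + z3^-1)
  (hlm : l * m = ga)
  (hDelta : 8 - 2 * al - 2 * be - 2 * ga - (al * l + be * m) = 0)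
  (h2 : (2 %| p * q * r)%N) :
  let c1 := (al, be) in let c2 := (-2, l) in let c3 := (m, -2) in
  let s1 := refl1 al be in let s2 := refl2 l in let s3 := refl3 m in
  let E := fun x1 x2 x3 : C =>
             (4 - ga) * x1 + (l + 2) * x2 + (m + 2) * x3 = -1 in
  (* (a) *)
  (forall (x1 x2 x3 : C) (nu1 nu2 nu3 : 'M[C]_3),
     corresp al be ga l m nu1 (scal2 x1 c1) ->
     corresp al be ga l m nu2 (scal2 x2 c2) ->
     corresp al be ga l m nu3 (scal2 x3 c3) ->
     let s1' := s1 *m nu1 in let s2' := s2 *m nu2 in let s3' := s3 *m nu3 in
     (forall r1 : nat, r = (2 * r1)%N ->
        ((s1' *m (s2' *m s3') ^+ r1) ^+ 2 = 1%:M <-> E x1 x2 x3)) /\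
     (forall q1 : nat, q = (2 * q1)%N ->
        ((s2' *m (s3' *m s1') ^+ q1) ^+ 2 = 1%:M <-> E x1 x2 x3)) /\
     (forall p1 : nat, p = (2 * p1)%N ->
        ((s3' *m (s1' *m s2') ^+ p1) ^+ 2 = 1%:M <-> E x1 x2 x3))) /\
  (* (b) *)
  (splits al be l m ->
     exists x1 x2 x3 : C,
       (exists nu1, corresp al be ga l m nu1 (scal2 x1 c1)) /\
       (exists nu2, corresp al be ga l m nu2 (scal2 x2 c2)) /\
       (exists nu3, corresp al be ga l m nu3 (scal2 x3 c3)) /\
       E x1 x2 x3).
Proof.
cbv zeta.
have [z10 z11 z12] := prim_facts hp hz1.
have [z20 z21 z22] := prim_facts hq hz2.
have [z30 z31 z32] := prim_facts hr hz3.
have a4 : 4 - al != 0 by rewrite hal; apply: four_nz.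
have b4 : 4 - be != 0 by rewrite hbe; apply: four_nz.
have g4 : 4 - ga != 0 by rewrite hga; apply: four_nz.
have l2 := l2_nz hlm hDelta b4 g4.
have m2 := m2_nz hlm hDelta a4 g4.
have two : (2:C) != 0 by rewrite pnatr_eq0.
have es1 : z1 + z1^-1 = al - 2 by rewrite hal; ring.
have es2 : z2 + z2^-1 = be - 2 by rewrite hbe; ring.
have es3 : z3 + z3^-1 = ga - 2 by rewrite hga; ring.
have HE x1 x2 x3 : (4 - ga) * x1 + (l + 2) * x2 + (m + 2) * x3 = -1 <->
    1 + (4 - ga) * x1 + (l + 2) * x2 + (m + 2) * x3 = 0.
  split => h.
  - transitivity (1 + ((4 - ga) * x1 + (l + 2) * x2 + (m + 2) * x3)); first by ring.
    by rewrite h; ring.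
  - transitivity ((1 + (4 - ga) * x1 + (l + 2) * x2 + (m + 2) * x3) - 1); first by ring.
    by rewrite h; ring.
have HTr r1 : r = (2 * r1)%N -> (refl2 l *m refl3 m) ^+ r1 = Vr ga l m.
  move=> hr1; have cub := cub_r _ _ _ hlm; rewrite -es3 in cub.
  have := @pow_half C z3 (Tr l m) z30 z31 z32 cub r1 (prim_half hr hz3 hr1).
  by rewrite es3 V_r.
have HTq q1 : q = (2 * q1)%N -> (refl3 m *m refl1 al be) ^+ q1 = Vq ga l m.
  move=> hq1; have cub := cub_q al be m; rewrite -es2 in cub.
  have := @pow_half C z2 (Tq al be m) z20 z21 z22 cub q1 (prim_half hq hz2 hq1).
  by rewrite es2 (V_q _ _ _ _ _ hlm hDelta).
have HTp p1 : p = (2 * p1)%N -> (refl1 al be *m refl2 l) ^+ p1 = Vp ga l m.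
  move=> hp1; have cub := cub_p al be l; rewrite -es1 in cub.
  have := @pow_half C z1 (Tp al be l) z10 z11 z12 cub p1 (prim_half hp hz1 hp1).
  by rewrite es1 (V_p _ _ _ _ _ hlm hDelta).
have partA : forall (x1 x2 x3 : C) (nu1 nu2 nu3 : 'M[C]_3),
     corresp al be ga l m nu1 (scal2 x1 (al, be)) ->
     corresp al be ga l m nu2 (scal2 x2 (-2, l)) ->
     corresp al be ga l m nu3 (scal2 x3 (m, -2)) ->
     (forall r1 : nat, r = (2 * r1)%N ->
        ((refl1 al be *m nu1 *m (refl2 l *m nu2 *m (refl3 m *m nu3)) ^+ r1) ^+ 2 = 1%:M <->
          (4 - ga) * x1 + (l + 2) * x2 + (m + 2) * x3 = -1)) /\
     (forall q1 : nat, q = (2 * q1)%N ->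
        ((refl2 l *m nu2 *m (refl3 m *m nu3 *m (refl1 al be *m nu1)) ^+ q1) ^+ 2 = 1%:M <->
          (4 - ga) * x1 + (l + 2) * x2 + (m + 2) * x3 = -1)) /\
     (forall p1 : nat, p = (2 * p1)%N ->
        ((refl3 m *m nu3 *m (refl1 al be *m nu1 *m (refl2 l *m nu2)) ^+ p1) ^+ 2 = 1%:M <->
          (4 - ga) * x1 + (l + 2) * x2 + (m + 2) * x3 = -1)).
  move=> x1 x2 x3 nu1 nu2 nu3; rewrite /scal2 /= => h1 h2' h3.
  have cf := @corresp_form C al be ga l m g4.
  rewrite (cf _ _ _ h1) (cf _ _ _ h2') (cf _ _ _ h3).
  split; [|split].
  - move=> r1 hr1; rewrite HE.
    apply: (@key C _ _ _ _ _ _ (Pm ga l m x1 x2 x3) (rk ga l m 2 (-al) (-be)) (bv ga l m)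
       (row3 x1 x2 x3) _ (2 / (4 - ga))).
    + exact: comm1.
    + exact: comm2.
    + exact: comm3.
    + exact: fixp1.
    + exact: fixp2.
    + exact: fixp3.
    + by rewrite HTr // W_r.
    + exact: PR.
    + exact: Pm_eq.
    + by rewrite mulf_neq0 ?invr_eq0.
    + by apply: rk_neq0; rewrite // two.
  - move=> q1 hq1; rewrite HE.
    apply: (@key C _ _ _ _ _ _ (Pm ga l m x1 x2 x3) (rk ga l m (-1) 2 (-l)) (bv ga l m)
       (row3 x1 x2 x3) _ (2 / (l + 2))).
    + exact: comm2.
    + exact: comm3.
    + exact: comm1.
    + exact: fixp2.
    + exact: fixp3.
    + exact: fixp1.
    + by rewrite HTq // W_q.
    + exact: PR.
    + exact: Pm_eq.
    + by rewrite mulf_neq0 ?invr_eq0.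
    + by apply: rk_neq0; rewrite // two orbT.
  - move=> p1 hp1; rewrite HE.
    apply: (@key C _ _ _ _ _ _ (Pm ga l m x1 x2 x3) (rk ga l m (-1) (-m) 2) (bv ga l m)
       (row3 x1 x2 x3) _ (2 / (m + 2))).
    + exact: comm3.
    + exact: comm1.
    + exact: comm2.
    + exact: fixp3.
    + exact: fixp1.
    + exact: fixp2.
    + by rewrite HTp // W_p.
    + exact: PR.
    + exact: Pm_eq.
    + by rewrite mulf_neq0 ?invr_eq0.
    + by apply: rk_neq0; rewrite // two !orbT.
split; first exact: partA.
case=> sig [hsG [hsM [hsN hsI]]].
have sig1 : sig 1%:M = 1%:M := hsN _ (inN_1 _ _ _ _).
have G1 := inG1 al be l m; have G2 := inG2 al be l m; have G3 := inG3 al be l m.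
have ss1 : refl1 al be *m refl1 al be = 1%:M.
  by rewrite /refl1 -/(M3 _ _ _ _ _ _ _ _ _); mxsimp; congr M3; ring.
have ss2 : refl2 l *m refl2 l = 1%:M.
  by rewrite /refl2 -/(M3 _ _ _ _ _ _ _ _ _); mxsimp; congr M3; ring.
have ss3 : refl3 m *m refl3 m = 1%:M.
  by rewrite /refl3 -/(M3 _ _ _ _ _ _ _ _ _); mxsimp; congr M3; ring.
have sigE g : g *m g = 1%:M -> inG al be l m g ->
    sig g = g *m (invmx g *m sig g) /\ (g *m (invmx g *m sig g)) ^+ 2 = 1%:M.
  move=> gg hG; have [gu _] := mulmx1_unit gg.
  rewrite mulKVmx //; split => //.
  by rewrite expr2 -mulmxE -hsM // gg sig1.
set nu1 := invmx (refl1 al be) *m sig (refl1 al be).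
set nu2 := invmx (refl2 l) *m sig (refl2 l).
set nu3 := invmx (refl3 m) *m sig (refl3 m).
have [e1 q1] := sigE _ ss1 G1; have [e2 q2] := sigE _ ss2 G2; have [e3 q3] := sigE _ ss3 G3.
rewrite -/nu1 in e1 q1; rewrite -/nu2 in e2 q2; rewrite -/nu3 in e3 q3.
have icor := @inN_corresp C al be ga l m hlm hDelta g4 l2.
have cf := @corresp_form C al be ga l m g4.
have hc1 := icor _ (hsI _ G1); have hc2 := icor _ (hsI _ G2); have hc3 := icor _ (hsI _ G3).
rewrite -/nu1 in hc1; rewrite -/nu2 in hc2; rewrite -/nu3 in hc3.
move: hc1 hc2 hc3.
set la1 := (nu1 *m a2 - a2) 0 0 / (4 - ga); set mu1 := (nu1 *m a3 - a3) 0 0 / (4 - ga).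
set la2 := (nu2 *m a2 - a2) 0 0 / (4 - ga); set mu2 := (nu2 *m a3 - a3) 0 0 / (4 - ga).
set la3 := (nu3 *m a2 - a2) 0 0 / (4 - ga); set mu3 := (nu3 *m a3 - a3) 0 0 / (4 - ga).
move=> hc1 hc2 hc3.
have q1' := q1; have q2' := q2; have q3' := q3.
rewrite (cf _ _ _ hc1) in q1'; rewrite (cf _ _ _ hc2) in q2'; rewrite (cf _ _ _ hc3) in q3'.
have [x1 [ex1 ey1]] := @invol1 C al be ga l m hlm hDelta g4 l2 two _ _ q1'.
have [x2 [ex2 ey2]] := @invol2 C ga l m hlm g4 two _ _ q2'.
have [x3 [ex3 ey3]] := @invol3 C ga l m hlm g4 two _ _ q3'.
have hc1' : corresp al be ga l m nu1 (scal2 x1 (al, be)) by rewrite /scal2 /= -ex1 -ey1.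
have hc2' : corresp al be ga l m nu2 (scal2 x2 (-2, l)) by rewrite /scal2 /= -ex2 -ey2.
have hc3' : corresp al be ga l m nu3 (scal2 x3 (m, -2)) by rewrite /scal2 /= -ex3 -ey3.
exists x1, x2, x3; split; first by exists nu1.
split; first by exists nu2.
split; first by exists nu3.
have [hA [hB hC]] := partA _ _ _ _ _ _ hc1' hc2' hc3'.
have sig_pow g n : inG al be l m g -> sig (g ^+ n) = sig g ^+ n.
  move=> hG; elim: n => [|n IH]; first by rewrite !expr0; exact: sig1.
  by rewrite !exprS -IH; apply: hsM => //; apply: inG_pow.
have sigW (Si Sj Sk : 'M[C]_3) n : inG al be l m Si -> inG al be l m Sj -> inG al be l m Sk ->
    sig ((Si *m (Sj *m Sk) ^+ n) ^+ 2) = (sig Si *m (sig Sj *m sig Sk) ^+ n) ^+ 2.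
  move=> hi hj hk.
  have hjk : inG al be l m (Sj *m Sk) by apply: inG_mul.
  rewrite sig_pow; last by apply: inG_mul => //; apply: inG_pow.
  by rewrite hsM ?sig_pow ?hsM //; apply: inG_pow.
have inW := @inN_W C al be ga l m hlm hDelta l2.
have GW (Si Sj Sk : 'M[C]_3) n : inG al be l m Si -> inG al be l m Sj -> inG al be l m Sk ->
    inG al be l m ((Si *m (Sj *m Sk) ^+ n) ^+ 2).
  by move=> hi hj hk; apply: inG_pow; apply: inG_mul => //; apply: inG_pow; apply: inG_mul.
move: h2; rewrite Euclid_dvdM // Euclid_dvdM // => /orP [/orP [hp2|hq2]|hr2].
- pose pp1 := (p %/ 2)%N; have hp1 : p = (2 * pp1)%N by rewrite mulnC divnK.
  apply/(hC pp1 hp1).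
  rewrite -e1 -e2 -e3 -sigW //.
  apply: hsN; apply: (inW _ _ _ _ _ (GW _ _ _ _ G3 G1 G2)).
  by rewrite HTp // W_p.
- pose qq1 := (q %/ 2)%N; have hq1 : q = (2 * qq1)%N by rewrite mulnC divnK.
  apply/(hB qq1 hq1).
  rewrite -e1 -e2 -e3 -sigW //.
  apply: hsN; apply: (inW _ _ _ _ _ (GW _ _ _ _ G2 G3 G1)).
  by rewrite HTq // W_q.
- pose rr1 := (r %/ 2)%N; have hr1 : r = (2 * rr1)%N by rewrite mulnC divnK.
  apply/(hA rr1 hr1).
  rewrite -e1 -e2 -e3 -sigW //.
  apply: hsN; apply: (inW _ _ _ _ _ (GW _ _ _ _ G1 G2 G3)).
  by rewrite HTr // W_r.
Qed.
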